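(* Let $X_0=0$ and $X_n=\sum_{j=1}^{X_{n-1}}\xi_{n,j}+\varepsilon_n$ for $n\ge1$, where $\{\xi_{n,j},\varepsilon_n\}$ are independent nonnegative integer-valued random variables with $\xi_{n,j}$, $j\in\mathbb N$, identically distributed for each $n$. Let $G_n(x)=\mathbb E x^{\xi_{n,1}}$, $H_n(x)=\mathbb E x^{\varepsilon_n}$, $\rho_n=G_n'(1)$, and $m_{n,k}=H_n^{(k)}(1)$ (finite for $k=1,2$); assume $G_n^{(s)}(1)<\infty$ for all $s\ge1$ and $n$. Assume (i) $\rho_n<1$, $\lim_n\rho_n=1$, $\sum_{n=1}^\infty(1-\rho_n)=\infty$; (ii) $\lim_{n\to\infty}G_n''(1)/(1-\rho_n)=\nu\in(0,\infty)$; (iii) $\lim_{n\to\infty}G_n^{(s)}(1)/(1-\rho_n)=0$ for every $s\ge3$; (iv) $\lim_{n\to\infty}m_{n,1}/(1-\rho_n)=\lambda$ and $\lim_{n\to\infty}m_{n,2}/(1-\rho_n)=0$. Then $X_n$ converges in distribution to the negative binomial distribution $\mathrm{NB}(2\lambda/\nu,\ \nu/(2+\nu))$.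
   Context: For $r>0$, $p\in(0,1)$, $\mathrm{NB}(r,p)$ is the distribution on $\{0,1,2,\dots\}$ with $\mathbb P\{X=k\}=\binom{k+r-1}{r-1}(1-p)^rp^k$, where $\binom{k+r-1}{r-1}=\frac{(k+r-1)(k+r-2)\cdots r}{k!}$; its generating function is $\big(\frac{1-p}{1-px}\big)^r$. For $\lambda=0$ the distribution is understood as the point mass at $0$. *)

(* Defs.v *)
From Stdlib Require Import Reals Lra Lia Factorial.
Open Scope R_scope.

Definition is_pmf (p : nat -> R) : Prop :=
  (forall k, 0 <= p k) /\ infinite_sum p 1.

Definition delta0 (k : nat) : R := if Nat.eqb k 0 then 1 else 0.

Definition conv (a b : nat -> R) (k : nat) : R :=
  sum_f_R0 (fun i => a i * b (k - i)%nat) k.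

(* m-fold convolution power: law of the sum of m i.i.d. copies (m = 0: point mass at 0). *)
Fixpoint conv_pow (g : nat -> R) (m : nat) : nat -> R :=
  match m with
  | O => delta0
  | S m' => conv (conv_pow g m') g
  end.

Fixpoint falling (k s : nat) : nat :=
  match s with
  | O => 1%nat
  | S s' => (falling k s' * (k - s'))%nat
  end.

(* fmom p s l : the s-th derivative at 1 of the generating function
   sum_k p k x^k (i.e. the s-th factorial moment) is finite and equals l. *)
Definition fmom (p : nat -> R) (s : nat) (l : R) : Prop :=
  infinite_sum (fun k => INR (falling k s) * p k) l.

Fixpoint rising (r : R) (k : nat) : R :=
  match k with
  | O => 1
  | S k' => rising r k' * (r + INR k')
  end.

(* NB(r,p) pmf: binom(k+r-1, r-1) (1-p)^r p^k; for r = 0 this is the point mass at 0. *)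
Definition nb_pmf (r p : R) (k : nat) : R :=
  rising r k / INR (fact k) * Rpower (1 - p) r * p ^ k.

(* Convergence in distribution of N-valued laws: convergence of the
   distribution functions P(X_n <= k) at every k (the only points of
   possible discontinuity of the limit CDF are integers, and the CDF is
   constant on [k, k+1)). *)
Definition conv_distr (law : nat -> nat -> R) (q : nat -> R) : Prop :=
  forall k : nat, Un_cv (fun n => sum_f_R0 (law n) k) (sum_f_R0 q k).

(* Main.v *)
Require Import Defs.
From Stdlib Require Import Reals Lra Lia Psatz.
From Coquelicot Require Import Coquelicot.
Open Scope R_scope.

Lemma ser_le (a b : nat -> R) la lb :
  is_series a la -> is_series b lb -> (forall n, a n <= b n) -> la <= lb.
Proof.
  intros Ha Hb H.
  assert (H' : Rbar_le (Finite la) (Finite lb)).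
  { apply (is_lim_seq_le (sum_n a) (sum_n b) la lb); auto.
    intros n. rewrite !sum_n_Reals. apply sum_Rle. intros; auto. }
  exact H'.
Qed.

Lemma ser_ge0 (a : nat -> R) la : is_series a la -> (forall n, 0 <= a n) -> 0 <= la.
Proof.
  intros Ha H. apply (ser_le (fun _ => 0) a); auto.
  apply is_series_Reals. intros eps He. exists O. intros n _. unfold R_dist.
  rewrite (sum_eq_R0 (fun _ => 0)); auto. rewrite Rminus_0_r, Rabs_R0; auto.
Qed.

Lemma ser_ex_le (a b : nat -> R) : (forall n, 0 <= a n <= b n) -> ex_series b -> ex_series a.
Proof.
  intros H Hb. apply (ex_series_le a b); auto.
  intros n. unfold norm; simpl. unfold abs; simpl. rewrite Rabs_pos_eq; apply H.
Qed.

Lemma ser_scal (c : R) (a : nat -> R) la : is_series a la -> is_series (fun n => c * a n) (c * la).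
Proof. intros H. apply (is_series_scal c a la H). Qed.

Lemma ser_plus (a b : nat -> R) la lb : is_series a la -> is_series b lb ->
  is_series (fun n => a n + b n) (la + lb).
Proof. intros H1 H2. apply (is_series_plus a b la lb H1 H2). Qed.

Lemma ser_minus (a b : nat -> R) la lb : is_series a la -> is_series b lb ->
  is_series (fun n => a n - b n) (la - lb).
Proof. intros H1 H2. apply (is_series_minus a b la lb H1 H2). Qed.

Lemma ser_ext (a b : nat -> R) l : (forall n, a n = b n) -> is_series a l -> is_series b l.
Proof. intros; eapply is_series_ext; eauto. Qed.

Lemma ser_uniq (a : nat -> R) l1 l2 : is_series a l1 -> is_series a l2 -> l1 = l2.
Proof. intros H1 H2. rewrite <- (is_series_unique a l1 H1). apply is_series_unique; auto. Qed.

Lemma falling1 k : INR (falling k 1) = INR k.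
Proof. assert (falling k 1 = k) as -> by (cbn [falling]; lia). reflexivity. Qed.
Lemma falling2 k : INR (falling k 2) = INR k * (INR k - 1).
Proof.
  destruct k as [|k]. simpl; ring.
  assert (falling (S k) 2 = S k * k)%nat as -> by (cbn [falling]; lia).
  rewrite mult_INR, S_INR; ring.
Qed.
Lemma falling3 k : INR (falling k 3) = INR k * (INR k - 1) * (INR k - 2).
Proof.
  destruct k as [|[|k]]. simpl; ring. simpl; ring.
  assert (falling (S (S k)) 3 = S (S k) * S k * k)%nat as -> by (cbn [falling]; lia).
  rewrite !mult_INR, !S_INR; ring.
Qed.

Lemma pow_bounds (y : R) (k : nat) : 0 <= y <= 1 ->
  1 - INR k * y <= (1 - y) ^ k /\
  (1 - y) ^ k <= 1 - INR k * y + INR k * (INR k - 1) / 2 * y ^ 2 /\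
  1 - INR k * y + INR k * (INR k - 1) / 2 * y ^ 2
    - INR k * (INR k - 1) * (INR k - 2) / 6 * y ^ 3 <= (1 - y) ^ k.
Proof.
  intros Hy. induction k as [|k IH].
  - simpl. lra.
  - destruct IH as [I1 [I2 I3]]. rewrite S_INR. simpl pow.
    assert (Hk : 0 <= INR k) by apply pos_INR.
    set (t := (1 - y) ^ k) in *.
    assert (0 <= 1 - y) by lra.
    split; [|split].
    + nra.
    + assert (0 <= INR k * y ^ 2) by (apply Rmult_le_pos; nra).
      assert ((1 - y) * t <= (1-y) * (1 - INR k * y + INR k * (INR k - 1) / 2 * y ^ 2))
        by (apply Rmult_le_compat_l; lra).
      assert (0 <= INR k * (INR k - 1) / 2 * y ^ 3 \/ INR k = 0).
      { destruct k. right; reflexivity. left. rewrite S_INR.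
        assert (0 <= INR k) by apply pos_INR.
        apply Rmult_le_pos; [|nra]. unfold Rdiv. apply Rmult_le_pos; [nra|lra]. }
      destruct H2 as [H2|H2].
      * simpl in *. nra.
      * rewrite H2 in *. simpl in *. nra.
    + assert ((1 - y) * t >= (1-y) * (1 - INR k * y + INR k * (INR k - 1) / 2 * y ^ 2
              - INR k * (INR k - 1) * (INR k - 2) / 6 * y ^ 3))
        by (apply Rle_ge, Rmult_le_compat_l; lra).
      assert (HH: 0 <= INR k * (INR k - 1) * (INR k - 2) / 6 * y ^ 4 \/ (INR k = 0 \/ INR k = 1)).
      { destruct k as [|[|k]]. right; left; reflexivity. right; right; simpl; reflexivity.
        left. rewrite !S_INR. assert (0 <= INR k) by apply pos_INR.
        apply Rmult_le_pos; [|nra]. unfold Rdiv. apply Rmult_le_pos; [|lra].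
        apply Rmult_le_pos; [|lra]. nra. }
      destruct HH as [HH|[HH|HH]]; rewrite ?HH in *; simpl in *; nra.
Qed.
Lemma pow_le1 (z : R) n : 0 <= z <= 1 -> z ^ n <= 1.
Proof. intros Hz. induction n; simpl. lra. assert (0 <= z ^ n) by (apply pow_le; lra). nra. Qed.

Definition pg (p : nat -> R) (z : R) := Series (fun k => p k * z ^ k).

Lemma pmf_series p : is_pmf p -> is_series p 1.
Proof. intros [_ H]. apply is_series_Reals; auto. Qed.

Lemma pg_series p z : is_pmf p -> 0 <= z <= 1 -> is_series (fun k => p k * z ^ k) (pg p z).
Proof.
  intros Hp Hz. apply Series_correct. apply (ser_ex_le _ p).
  - intros n. destruct Hp as [H0 _]. split. apply Rmult_le_pos; auto. apply pow_le; lra.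
    rewrite <- (Rmult_1_r (p n)) at 2. apply Rmult_le_compat_l; auto. apply pow_le1; lra.
  - exists 1. apply pmf_series; auto.
Qed.

Lemma pg_range p z : is_pmf p -> 0 <= z <= 1 -> 0 <= pg p z <= 1.
Proof.
  intros Hp Hz. pose proof (pg_series p z Hp Hz) as H. destruct Hp as [H0 H1]. split.
  - apply (ser_ge0 _ _ H). intros; apply Rmult_le_pos; auto; apply pow_le; lra.
  - apply (ser_le _ _ _ _ H (pmf_series p (conj H0 H1))).
    intros n. rewrite <- (Rmult_1_r (p n)) at 2. apply Rmult_le_compat_l; auto. apply pow_le1; lra.
Qed.

Lemma pg_one p : is_pmf p -> pg p 1 = 1.
Proof.
  intros Hp. apply (ser_uniq (fun k => p k * 1 ^ k)). apply pg_series; auto; lra.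
  apply (ser_ext p). intros; rewrite pow1; ring. apply pmf_series; auto.
Qed.

Lemma pg_bounds p y m1 m2 : is_pmf p -> fmom p 1 m1 -> fmom p 2 m2 -> 0 <= y <= 1 ->
  1 - m1 * y <= pg p (1 - y) <= 1 - m1 * y + m2 / 2 * y ^ 2.
Proof.
  intros Hp H1 H2 Hy.
  pose proof (pg_series p (1-y) Hp ltac:(lra)) as HS.
  apply is_series_Reals in H1. apply is_series_Reals in H2.
  pose proof (pmf_series p Hp) as H0.
  assert (Hpos : forall k, 0 <= p k) by apply Hp.
  split.
  - rewrite (Rmult_comm m1 y).
    apply (ser_le (fun k => p k - y * (INR (falling k 1) * p k)) _ _ _ (ser_minus _ _ _ _ H0 (ser_scal y _ _ H1)) HS).
    intros k. rewrite falling1. destruct (pow_bounds y k Hy) as [A _].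
    assert (p k * (1 - INR k * y) <= p k * (1 - y) ^ k) by (apply Rmult_le_compat_l; auto). nra.
  - replace (1 - m1 * y + m2 / 2 * y ^ 2) with (1 - y * m1 + (y^2/2) * m2) by field.
    apply (ser_le _ (fun k => p k - y * (INR (falling k 1) * p k) + (y^2/2) * (INR (falling k 2) * p k)) _ _ HS
      (ser_plus _ _ _ _ (ser_minus _ _ _ _ H0 (ser_scal y _ _ H1)) (ser_scal _ _ _ H2))).
    intros k. rewrite falling1, falling2. destruct (pow_bounds y k Hy) as [_ [A _]].
    assert (p k * (1 - y) ^ k <= p k * (1 - INR k * y + INR k * (INR k - 1) / 2 * y ^ 2))
      by (apply Rmult_le_compat_l; auto). nra.
Qed.

Lemma pg_lower3 p y m1 m2 m3 : is_pmf p -> fmom p 1 m1 -> fmom p 2 m2 -> fmom p 3 m3 -> 0 <= y <= 1 ->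
  1 - m1 * y + m2 / 2 * y ^ 2 - m3 / 6 * y ^ 3 <= pg p (1 - y).
Proof.
  intros Hp H1 H2 H3 Hy.
  pose proof (pg_series p (1-y) Hp ltac:(lra)) as HS.
  apply is_series_Reals in H1. apply is_series_Reals in H2. apply is_series_Reals in H3.
  pose proof (pmf_series p Hp) as H0.
  assert (Hpos : forall k, 0 <= p k) by apply Hp.
  replace (1 - m1 * y + m2 / 2 * y ^ 2 - m3 / 6 * y ^ 3) with (1 - y * m1 + (y^2/2) * m2 - (y^3/6)*m3) by field.
  apply (ser_le (fun k => p k - y * (INR (falling k 1) * p k) + (y^2/2) * (INR (falling k 2) * p k) - (y^3/6) * (INR (falling k 3) * p k)) _ _ _
      (ser_minus _ _ _ _ (ser_plus _ _ _ _ (ser_minus _ _ _ _ H0 (ser_scal y _ _ H1)) (ser_scal _ _ _ H2)) (ser_scal _ _ _ H3)) HS).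
  intros k. rewrite falling1, falling2, falling3. destruct (pow_bounds y k Hy) as [_ [_ A]].
  assert (p k * (1 - INR k * y + INR k * (INR k - 1) / 2 * y ^ 2
    - INR k * (INR k - 1) * (INR k - 2) / 6 * y ^ 3) <= p k * (1 - y) ^ k)
      by (apply Rmult_le_compat_l; auto). nra.
Qed.

Lemma partial_le (a : nat -> R) l N : is_series a l -> (forall n, 0 <= a n) -> sum_f_R0 a N <= l.
Proof.
  intros H Hp. apply is_series_Reals in H.
  apply (growing_ineq (fun n => sum_f_R0 a n)); auto.
  intros n. simpl. specialize (Hp (S n)). lra.
Qed.

Lemma term_le (a : nat -> R) l k : is_series a l -> (forall n, 0 <= a n) -> a k <= l.
Proof.
  intros H Hp. eapply Rle_trans; [|apply (partial_le a l k H Hp)].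
  destruct k. simpl; lra. simpl. assert (0 <= sum_f_R0 a k) by (apply cond_pos_sum; auto). lra.
Qed.

Lemma lim_le (u : nat -> R) l M : Un_cv u l -> (forall n, u n <= M) -> l <= M.
Proof.
  intros H Hb. apply is_lim_seq_Reals in H.
  assert (Rbar_le (Finite l) (Finite M)).
  { apply (is_lim_seq_le u (fun _ => M) l M); auto. apply is_lim_seq_const. }
  exact H0.
Qed.

Lemma ser_finsum (a : nat -> nat -> R) (b : nat -> R) K :
  (forall k, is_series (fun m => a m k) (b k)) ->
  is_series (fun m => sum_f_R0 (fun k => a m k) K) (sum_f_R0 b K).
Proof.
  intros H. induction K; simpl. apply H. apply ser_plus; auto.
Qed.

Lemma bounded_series (a : nat -> R) M : (forall n, 0 <= a n) -> (forall N, sum_f_R0 a N <= M) ->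
  exists l, is_series a l /\ l <= M.
Proof.
  intros Hp Hb.
  destruct (growing_cv (fun n => sum_f_R0 a n)) as [l Hl].
  - intros n; simpl. specialize (Hp (S n)). lra.
  - exists M. intros x [n ->]. auto.
  - exists l. split. apply is_series_Reals; exact Hl. apply (lim_le _ _ _ Hl Hb).
Qed.

Lemma tonelli (a : nat -> nat -> R) (b : nat -> R) S :
  (forall m k, 0 <= a m k) -> (forall m, is_series (a m) (b m)) -> is_series b S ->
  exists c : nat -> R, (forall k, is_series (fun m => a m k) (c k)) /\ is_series c S.
Proof.
  intros Hp Hb HS.
  assert (Hbp : forall m, 0 <= b m) by (intros; apply (ser_ge0 _ _ (Hb m)); auto).
  assert (Hc : forall k, ex_series (fun m => a m k)).
  { intros k. apply (ser_ex_le _ b). intros m; split; auto. apply (term_le (a m)); auto.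
    exists S; auto. }
  exists (fun k => Series (fun m => a m k)).
  assert (Hc' : forall k, is_series (fun m => a m k) (Series (fun m => a m k))).
  { intros; apply Series_correct; auto. }
  split; auto.
  assert (Hcp : forall k, 0 <= Series (fun m => a m k)) by (intros; apply (ser_ge0 _ _ (Hc' k)); auto).
  destruct (bounded_series (fun k => Series (fun m => a m k)) S Hcp) as [T [HT HTS]].
  - intros K. pose proof (ser_finsum a _ K Hc') as HF.
    apply (ser_le _ _ _ _ HF HS). intros m. apply partial_le; auto.
  - replace S with T; auto. apply Rle_antisym; auto.
    apply is_series_Reals in HS. apply (lim_le _ _ _ HS). intros M.
    pose proof (ser_finsum (fun k m => a m k) b M Hb) as HF. simpl in HF.
    apply (ser_le _ _ _ _ HF HT). intros k.
    apply (partial_le (fun m => a m k)); auto.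
Qed.

Lemma conv_nonneg a b k : (forall n, 0 <= a n) -> (forall n, 0 <= b n) -> 0 <= conv a b k.
Proof. intros Ha Hb. unfold conv. apply cond_pos_sum. intros; apply Rmult_le_pos; auto. Qed.

Lemma conv_series a b z A B : (forall n, 0 <= a n) -> (forall n, 0 <= b n) -> 0 <= z ->
  is_series (fun k => a k * z ^ k) A -> is_series (fun k => b k * z ^ k) B ->
  is_series (fun k => conv a b k * z ^ k) (A * B).
Proof.
  intros Ha Hb Hz HA HB.
  pose proof (is_series_mult_pos _ _ _ _ HA HB) as H.
  eapply ser_ext; [|apply H].
  - intros k. unfold conv. rewrite Rmult_comm, scal_sum. apply sum_eq. intros i Hi.
    assert (E : z ^ k = z ^ i * z ^ (k - i)) by (rewrite <- pow_add; f_equal; lia).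
    rewrite E. ring.
  - intros; apply Rmult_le_pos; auto; apply pow_le; auto.
  - intros; apply Rmult_le_pos; auto; apply pow_le; auto.
Qed.

Lemma delta_series (c : R) : is_series (fun k => if Nat.eqb k 0 then c else 0) c.
Proof.
  apply is_series_Reals. intros eps He. exists O. intros n _.
  assert (sum_f_R0 (fun k => if Nat.eqb k 0 then c else 0) n = c).
  { induction n; simpl; auto. rewrite IHn; ring. }
  unfold R_dist. simpl in *. rewrite H. rewrite Rminus_diag, Rabs_R0; auto.
Qed.

Lemma delta0_nonneg k : 0 <= delta0 k.
Proof. unfold delta0; destruct (Nat.eqb k 0); lra. Qed.

Lemma conv_pow_nonneg g m k : (forall n, 0 <= g n) -> 0 <= conv_pow g m k.
Proof.
  intros Hg. revert k. induction m; intros k; simpl. apply delta0_nonneg.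
  apply conv_nonneg; auto.
Qed.

Lemma conv_pow_series g z Gz m : (forall n, 0 <= g n) -> 0 <= z ->
  is_series (fun k => g k * z ^ k) Gz ->
  is_series (fun k => conv_pow g m k * z ^ k) (Gz ^ m).
Proof.
  intros Hg Hz HG. induction m; simpl.
  - eapply ser_ext; [|apply (delta_series 1)]. intros k. unfold delta0.
    destruct k; simpl; ring.
  - rewrite Rmult_comm. apply conv_series; auto. intros; apply conv_pow_nonneg; auto.
Qed.

Fixpoint FF (g h : nat -> nat -> R) (n : nat) (z : R) : R :=
  match n with
  | O => 1
  | S n' => FF g h n' (pg (g (S n')) z) * pg (h (S n')) z
  end.

Lemma law_props (g h law : nat -> nat -> R)
  (Hg : forall n, (1 <= n)%nat -> is_pmf (g n))
  (Hh : forall n, (1 <= n)%nat -> is_pmf (h n))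
  (Hlaw0 : forall k, law O k = delta0 k)
  (HlawS : forall n k, (1 <= n)%nat ->
     infinite_sum (fun m => law (n - 1)%nat m * conv (conv_pow (g n) m) (h n) k)
                  (law n k)) :
  forall n, (forall k, 0 <= law n k) /\
    forall z, 0 <= z <= 1 -> is_series (fun k => law n k * z ^ k) (FF g h n z).
Proof.
  induction n as [|n [IH1 IH2]].
  - split. intros; rewrite Hlaw0; apply delta0_nonneg.
    intros z Hz. simpl. eapply ser_ext; [|apply (delta_series 1)]. intros k.
    rewrite Hlaw0. unfold delta0. destruct k; simpl; ring.
  - assert (HS : forall k, is_series (fun m => law n m * conv (conv_pow (g (S n)) m) (h (S n)) k) (law (S n) k)).
    { intros k. apply is_series_Reals. specialize (HlawS (S n) k ltac:(lia)).
      replace (S n - 1)%nat with n in HlawS by lia. exact HlawS. }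
    assert (Hgp : forall k, 0 <= g (S n) k) by (apply Hg; lia).
    assert (Hhp : forall k, 0 <= h (S n) k) by (apply Hh; lia).
    assert (Hcp : forall m k, 0 <= law n m * conv (conv_pow (g (S n)) m) (h (S n)) k).
    { intros; apply Rmult_le_pos; auto. apply conv_nonneg; auto. intros; apply conv_pow_nonneg; auto. }
    split.
    + intros k. apply (ser_ge0 _ _ (HS k)); auto.
    + intros z Hz. simpl.
      set (G := pg (g (S n)) z). set (H := pg (h (S n)) z).
      assert (HG : 0 <= G <= 1) by (apply pg_range; auto; apply Hg; lia).
      assert (HGs : is_series (fun k => g (S n) k * z ^ k) G) by (apply pg_series; auto; apply Hg; lia).
      assert (HHs : is_series (fun k => h (S n) k * z ^ k) H) by (apply pg_series; auto; apply Hh; lia).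
      destruct (tonelli (fun m k => law n m * conv (conv_pow (g (S n)) m) (h (S n)) k * z ^ k)
                        (fun m => law n m * (G ^ m * H)) (FF g h n G * H)) as [c [Hc1 Hc2]].
      * intros; apply Rmult_le_pos; auto. apply pow_le; lra.
      * intros m.
        assert (A : is_series (fun k => conv (conv_pow (g (S n)) m) (h (S n)) k * z ^ k) (G ^ m * H)).
        { apply conv_series; auto. intros; apply conv_pow_nonneg; auto. lra.
          apply conv_pow_series; auto. lra. }
        eapply ser_ext; [|apply (ser_scal (law n m) _ _ A)].
        intros k; simpl; ring.
      * assert (B := ser_scal H _ _ (IH2 G HG)).
        replace (FF g h n G * H) with (H * FF g h n G) by ring.
        eapply ser_ext; [|apply B]. intros m; simpl; ring.
      * eapply ser_ext; [|exact Hc2]. intros k.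
        apply (ser_uniq (fun m => law n m * conv (conv_pow (g (S n)) m) (h (S n)) k * z ^ k)); auto.
        rewrite Rmult_comm.
        eapply ser_ext; [|apply (ser_scal (z ^ k) _ _ (HS k))]. intros m; simpl; ring.
Qed.

Lemma tail_bound (a : nat -> R) x A k : (forall j, 0 <= a j <= 1) -> 0 <= x < 1 ->
  is_series (fun j => a j * x ^ j) A ->
  0 <= A - sum_f_R0 (fun j => a j * x ^ j) k <= x ^ (S k) / (1 - x).
Proof.
  intros Ha Hx HA.
  assert (HT : is_series (fun j => a (S k + j)%nat * x ^ (S k + j)) (A - sum_f_R0 (fun j => a j * x ^ j) k)).
  { apply (is_series_incr_n (fun j => a j * x ^ j) (S k)). lia.
    simpl pred. rewrite sum_n_Reals.
    assert (E : forall u v : R, plus (u - v) v = u) by (intros u v; unfold plus; simpl; change (Rplus (u-v) v = u); ring).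
    rewrite E. exact HA. }
  split.
  - apply (ser_ge0 _ _ HT). intros; apply Rmult_le_pos; [apply Ha|apply pow_le; lra].
  - assert (HG : is_series (fun j => x ^ (S k) * x ^ j) (x ^ (S k) * / (1 - x))).
    { apply ser_scal. apply is_series_geom. rewrite Rabs_pos_eq; lra. }
    apply (ser_le _ _ _ _ HT HG). intros j. rewrite pow_add.
    assert (0 <= x ^ (S k) * x ^ j) by (apply Rmult_le_pos; apply pow_le; lra).
    destruct (Ha (S k + j)%nat). nra.
Qed.

Lemma finsum_cv0 (f : nat -> nat -> R) K : (forall j, (j <= K)%nat -> Un_cv (fun n => f n j) 0) ->
  Un_cv (fun n => sum_f_R0 (f n) K) 0.
Proof.
  induction K; intros H; simpl. apply H; lia.
  replace 0 with (0 + 0) by ring. apply CV_plus. apply IHK; intros; apply H; lia. apply H; lia.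
Qed.

Lemma pgf_continuity (p : nat -> nat -> R) (q : nat -> R) (P : nat -> R -> R) (Q : R -> R) :
  (forall n k, 0 <= p n k <= 1) -> (forall k, 0 <= q k <= 1) ->
  (forall n x, 0 <= x < 1 -> is_series (fun k => p n k * x ^ k) (P n x)) ->
  (forall x, 0 <= x < 1 -> is_series (fun k => q k * x ^ k) (Q x)) ->
  (forall x, 0 <= x < 1 -> Un_cv (fun n => P n x) (Q x)) ->
  forall k, Un_cv (fun n => p n k) (q k).
Proof.
  intros Hp Hq HP HQ Hcv k. induction k as [k IH] using (well_founded_induction Wf_nat.lt_wf).
  assert (Key : forall x, 0 < x < 1 -> exists w : nat -> R, Un_cv w 0 /\ forall n,
     Rabs (p n k - q k) * x ^ k <= Rabs (P n x - Q x) + Rabs (w n) + x ^ (S k) / (1 - x)).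
  { intros x Hx.
    assert (Hx' : 0 <= x < 1) by lra.
    exists (fun n => match k with O => 0 | S k' => sum_f_R0 (fun j => (p n j - q j) * x ^ j) k' end).
    split.
    - destruct k as [|k']. intros e He; exists O; intros; unfold R_dist; rewrite Rminus_diag, Rabs_R0; auto.
      apply (finsum_cv0 (fun n j => (p n j - q j) * x ^ j)). intros j Hj.
      replace 0 with ((q j - q j) * x ^ j) by ring.
      apply (CV_mult _ (fun _ => x ^ j)). apply CV_minus. apply IH; lia.
      intros e He; exists O; intros; unfold R_dist; rewrite Rminus_diag, Rabs_R0; auto.
      intros e He; exists O; intros; unfold R_dist; rewrite Rminus_diag, Rabs_R0; auto.
    - intros n.
      pose proof (tail_bound (p n) x (P n x) k (Hp n) Hx' (HP n x Hx')) as T1.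
      pose proof (tail_bound q x (Q x) k Hq Hx' (HQ x Hx')) as T2.
      assert (E : sum_f_R0 (fun j => p n j * x ^ j) k - sum_f_R0 (fun j => q j * x ^ j) k =
        (p n k - q k) * x ^ k + match k with O => 0 | S k' => sum_f_R0 (fun j => (p n j - q j) * x ^ j) k' end).
      { destruct k as [|k']. simpl; ring. rewrite !tech5.
        assert (H: sum_f_R0 (fun j => (p n j - q j) * x^j) k' = sum_f_R0 (fun j => p n j * x^j) k' - sum_f_R0 (fun j => q j * x^j) k')
          by (rewrite <- minus_sum; apply sum_eq; intros; ring).
        rewrite H; ring. }
      assert (0 <= x ^ k) by (apply pow_le; lra).
      rewrite <- (Rabs_pos_eq (x ^ k)) by auto. rewrite <- Rabs_mult.
      set (w := match k with O => 0 | S k' => sum_f_R0 (fun j => (p n j - q j) * x ^ j) k' end) in *.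
      set (t := x ^ S k / (1 - x)) in *.
      set (s1 := sum_f_R0 (fun j => p n j * x ^ j) k) in *.
      set (s2 := sum_f_R0 (fun j => q j * x ^ j) k) in *.
      assert (R1 : (p n k - q k) * x ^ k = (P n x - Q x) - w - ((P n x - s1) - (Q x - s2))) by lra.
      rewrite R1.
      assert (Rabs ((P n x - s1) - (Q x - s2)) <= t) by (apply Rabs_le; lra).
      revert H0. generalize (P n x - s1 - (Q x - s2)). intros r Hr.
      unfold Rabs in *; repeat destruct Rcase_abs; lra.
  }
  intros eps He.
  set (x := Rmin (1/2) (eps/4)).
  assert (Hx : 0 < x < 1) by (unfold x; split; [apply Rmin_glb_lt; lra|
     eapply Rle_lt_trans; [apply Rmin_l|lra]]).
  assert (Hx2 : x <= eps / 4) by apply Rmin_r.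
  assert (Hx1 : x <= 1/2) by apply Rmin_l.
  destruct (Key x Hx) as [w [Hw Hb]].
  assert (Hxk : 0 < x ^ k) by (apply pow_lt; lra).
  assert (He' : 0 < x ^ k * (eps / 4)) by (apply Rmult_lt_0_compat; lra).
  destruct (Hcv x ltac:(lra) _ He') as [N1 HN1].
  destruct (Hw _ He') as [N2 HN2].
  exists (Nat.max N1 N2). intros n Hn.
  specialize (HN1 n ltac:(lia)). specialize (HN2 n ltac:(lia)). specialize (Hb n).
  unfold R_dist in *. rewrite Rminus_0_r in HN2.
  assert (T : x ^ S k / (1 - x) <= x ^ k * (eps / 2)).
  { simpl. unfold Rdiv. apply (Rmult_le_reg_r (1 - x)); [lra|].
    rewrite Rmult_assoc, Rinv_l, Rmult_1_r by lra.
    assert (x <= eps / 2 * (1 - x)) by nra. nra. }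
  assert (Rabs (p n k - q k) * x ^ k < eps * x ^ k) by lra.
  apply (Rmult_lt_reg_r (x ^ k)); auto.
Qed.

Lemma nat_unbounded (A : R) : exists n : nat, A < INR n.
Proof.
  destruct (archimed (Rabs A)) as [H1 _].
  assert (Hz : (0 <= up (Rabs A))%Z).
  { apply le_IZR. pose proof (Rabs_pos A). simpl. lra. }
  exists (Z.to_nat (up (Rabs A))). rewrite INR_IZR_INZ, Znat.Z2Nat.id by auto.
  pose proof (Rle_abs A). lra.
Qed.

Definition bc (r : R) (k : nat) : R := rising r k / INR (Factorial.fact k).

Lemma bc_S r k : bc r (S k) = bc r k * ((r + INR k) / INR (S k)).
Proof.
  unfold bc. simpl rising. rewrite fact_simpl, mult_INR.
  pose proof (INR_fact_neq_0 k). assert (INR (S k) <> 0) by (rewrite S_INR; pose proof (pos_INR k); lra).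
  field; auto.
Qed.

Lemma rising_nonneg r k : 0 <= r -> 0 <= rising r k.
Proof. intros Hr. induction k; simpl. lra. apply Rmult_le_pos; auto. pose proof (pos_INR k); lra. Qed.

Lemma bc_nonneg r k : 0 <= r -> 0 <= bc r k.
Proof.
  intros Hr. unfold bc. apply Rmult_le_pos. apply rising_nonneg; auto.
  apply Rlt_le, Rinv_0_lt_compat. apply lt_0_INR, Factorial.lt_O_fact.
Qed.

Lemma bc_0 r : bc r 0 = 1.
Proof. unfold bc; simpl. field. Qed.

Lemma term_le_finsum (f : nat -> R) k N : (forall n, 0 <= f n) -> (k <= N)%nat -> f k <= sum_f_R0 f N.
Proof.
  intros Hf Hk. induction N.
  - assert (k = 0)%nat by lia. subst; simpl; lra.
  - destruct (Nat.eq_dec k (S N)). subst. simpl. pose proof (cond_pos_sum f N Hf). lra.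
    simpl. specialize (IHN ltac:(lia)). specialize (Hf (S N)). lra.
Qed.

Lemma bc_bounded r s : 0 <= r -> 0 <= s < 1 -> exists M, forall n, Rabs (bc r n * s ^ n) <= M.
Proof.
  intros Hr Hs.
  set (d := fun n => bc r n * s ^ n).
  assert (Hd : forall n, 0 <= d n) by (intros; unfold d; apply Rmult_le_pos; [apply bc_nonneg; auto|apply pow_le; lra]).
  destruct (nat_unbounded (s * r / (1 - s))) as [K0 HK0].
  assert (Hdec : forall k, (K0 <= k)%nat -> d (S k) <= d k).
  { intros k Hk. unfold d. rewrite bc_S. simpl pow.
    assert (HK : INR K0 <= INR k) by (apply le_INR; auto).
    assert (Hsr : s * r <= INR k * (1 - s)).
    { assert (s * r / (1 - s) * (1 - s) = s * r) by (field; lra).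
      assert (s * r / (1 - s) * (1 - s) <= INR k * (1 - s)) by (apply Rmult_le_compat_r; lra). lra. }
    assert (HSk : 0 < INR (S k)) by (apply lt_0_INR; lia).
    assert (Hq : s * ((r + INR k) / INR (S k)) <= 1).
    { rewrite S_INR in *. apply (Rmult_le_reg_r (INR k + 1)); auto.
      unfold Rdiv. replace (s * ((r + INR k) * / (INR k + 1)) * (INR k + 1)) with (s * (r + INR k)) by (field; lra).
      lra. }
    assert (0 <= bc r k * s ^ k) by apply Hd.
    replace (bc r k * ((r + INR k) / INR (S k)) * (s * s ^ k)) with ((bc r k * s ^ k) * (s * ((r + INR k) / INR (S k)))) by ring.
    nra. }
  exists (sum_f_R0 d K0). intros n. rewrite Rabs_pos_eq by apply Hd. fold (d n).
  destruct (Compare_dec.le_lt_dec n K0). apply term_le_finsum; auto.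
  assert (forall j, d (K0 + j)%nat <= d K0).
  { induction j. rewrite Nat.add_0_r; lra. replace (K0 + S j)%nat with (S (K0 + j)) by lia.
    eapply Rle_trans. apply Hdec; lia. auto. }
  replace n with (K0 + (n - K0))%nat by lia. eapply Rle_trans. apply H.
  apply term_le_finsum; auto.
Qed.

Lemma bc_radius r t : 0 <= r -> Rabs t < 1 -> Rbar_lt (Rabs t) (CV_radius (bc r)).
Proof.
  intros Hr Ht. set (s := (Rabs t + 1) / 2).
  assert (Hs : 0 <= s < 1) by (unfold s; pose proof (Rabs_pos t); lra).
  apply (Rbar_lt_le_trans _ s). simpl. unfold s; lra.
  destruct (CV_radius_bounded (bc r)) as [Hub _]. apply Hub.
  apply bc_bounded; auto.
Qed.

Lemma pser_R a x l : is_pseries a x l -> is_series (fun k => a k * x ^ k) l.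
Proof.
  intros H. unfold is_pseries in H. eapply ser_ext; [|apply H].
  intros k. rewrite pow_n_pow. change (x ^ k * a k = a k * x ^ k). ring.
Qed.

Lemma binom_series r t : 0 <= r -> -1 < t < 1 ->
  is_series (fun k => bc r k * t ^ k) (exp (- r * ln (1 - t))).
Proof.
  intros Hr Ht.
  set (f := PSeries (bc r)).
  set (f' := PSeries (PS_derive (bc r))).
  assert (Hf : forall u, -1 < u < 1 -> is_series (fun k => bc r k * u ^ k) (f u)).
  { intros u Hu. apply pser_R. apply PSeries_correct. apply CV_radius_inside.
    apply bc_radius; auto. apply Rabs_def1; lra. }
  assert (Hf' : forall u, -1 < u < 1 -> is_series (fun k => PS_derive (bc r) k * u ^ k) (f' u)).
  { intros u Hu. apply pser_R. apply PSeries_correct. apply CV_radius_inside.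
    rewrite CV_radius_derive. apply bc_radius; auto. apply Rabs_def1; lra. }
  assert (Hd : forall u, -1 < u < 1 -> is_derive f u (f' u)).
  { intros u Hu. apply is_derive_PSeries. apply bc_radius; auto. apply Rabs_def1; lra. }
  assert (ODE : forall u, -1 < u < 1 -> (1 - u) * f' u = r * f u).
  { intros u Hu.
    assert (A : is_series (fun k => (r + INR k) * bc r k * u ^ k) (f' u)).
    { eapply ser_ext; [|apply (Hf' u Hu)]. intros k. unfold PS_derive. rewrite bc_S.
      field. rewrite S_INR; pose proof (pos_INR k); lra. }
    assert (B : is_series (fun k => INR k * bc r k * u ^ k) (u * f' u)).
    { apply (is_series_decr_1 (fun k => INR k * bc r k * u ^ k)).
      assert (E : forall v : R, plus v (opp (INR 0 * bc r 0 * u ^ 0)) = v)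
        by (intros v; unfold plus, opp; simpl; change (Rplus v (Ropp (0 * bc r 0 * 1)) = v); ring).
      rewrite E. eapply ser_ext; [|apply (ser_scal u _ _ (Hf' u Hu))].
      intros k. unfold PS_derive. simpl pow. ring. }
    assert (C : is_series (fun k => (r + INR k) * bc r k * u ^ k) (r * f u + u * f' u)).
    { eapply ser_ext; [|apply (ser_plus _ _ _ _ (ser_scal r _ _ (Hf u Hu)) B)]. intros; simpl; ring. }
    pose proof (ser_uniq _ _ _ A C). lra. }
  set (e := fun u => exp (r * ln (1 - u))).
  set (gg := fun u => e u * f u).
  assert (Hg : forall u, -1 < u < 1 -> is_derive gg u 0).
  { intros u Hu.
    assert (He : is_derive e u (e u * (r * (- / (1 - u))))).
    { unfold e. auto_derive. lra. replace (1 + - u) with (1 - u) by ring. field. lra. }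
    pose proof (is_derive_mult e f u _ _ He (Hd u Hu) (fun a b => Rmult_comm a b)) as HM.
    unfold gg. eapply is_derive_ext. intros; reflexivity.
    replace 0 with (plus (mult (e u * (r * - / (1 - u))) (f u)) (mult (e u) (f' u))). exact HM.
    unfold plus, mult; simpl. change ((e u * (r * - / (1 - u))) * f u + e u * f' u = 0).
    specialize (ODE u Hu).
    replace (f' u) with (r * f u / (1 - u)) by (field_simplify_eq; lra).
    field. lra. }
  destruct (MVT_gen gg 0 t (fun _ => 0)) as [c [Hc Hc2]].
  - intros x Hx. apply Hg. split.
    + apply Rlt_le_trans with (Rmin 0 t). apply Rmin_glb_lt; lra. lra.
    + apply Rle_lt_trans with (Rmax 0 t). lra. apply Rmax_lub_lt; lra.
  - intros x Hx. apply continuity_pt_filterlim. apply (ex_derive_continuous gg).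
    exists 0. apply Hg. split.
    + apply Rlt_le_trans with (Rmin 0 t). apply Rmin_glb_lt; lra. lra.
    + apply Rle_lt_trans with (Rmax 0 t). lra. apply Rmax_lub_lt; lra.
  - assert (G0 : gg 0 = 1).
    { unfold gg, e, f. rewrite PSeries_0, bc_0. rewrite Rminus_0_r, ln_1, Rmult_0_r, exp_0. ring. }
    assert (Gt : gg t = 1) by lra.
    unfold gg, e in Gt.
    replace (exp (- r * ln (1 - t))) with (f t).
    apply Hf; lra.
    replace (- r * ln (1 - t)) with (- (r * ln (1 - t))) by ring. rewrite exp_Ropp.
    pose proof (exp_pos (r * ln (1 - t))).
    field_simplify_eq; [lra| lra].
Qed.

Lemma ln_le_sub1 x : 0 < x -> ln x <= x - 1.
Proof.
  intros Hx. destruct (Rle_or_lt (ln x) (x - 1)) as [H|H]; auto.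
  apply exp_increasing in H. rewrite exp_ln in H by auto.
  pose proof (exp_ineq1_le (x - 1)). lra.
Qed.

Lemma ln1m_bounds w : 0 <= w < 1 -> w <= - ln (1 - w) <= w + w ^ 2 / (1 - w).
Proof.
  intros Hw. split.
  - pose proof (ln_le_sub1 (1 - w) ltac:(lra)). lra.
  - rewrite <- ln_Rinv by lra. eapply Rle_trans. apply ln_le_sub1. apply Rinv_0_lt_compat; lra.
    apply Req_le. field. lra.
Qed.

Lemma le_div_l a b q : 0 < q -> a <= b * q -> a / q <= b.
Proof. intros Hq H. apply (Rmult_le_reg_r q); auto. unfold Rdiv. rewrite Rmult_assoc, Rinv_l, Rmult_1_r by lra. auto. Qed.
Lemma le_div_r a b q : 0 < q -> a * q <= b -> a <= b / q.
Proof. intros Hq H. apply (Rmult_le_reg_r q); auto. unfold Rdiv. rewrite Rmult_assoc, Rinv_l, Rmult_1_r by lra. auto. Qed.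

Lemma local_est (nu lam a be ga mu et y d H : R) :
  0 < nu -> 0 <= lam -> 0 < a <= 1 -> 0 <= be -> 0 <= ga -> 0 <= mu -> 0 <= et ->
  0 <= y <= 1 -> 0 <= d <= y ->
  a * y + be * a / 2 * y ^ 2 - ga * a / 6 * y ^ 3 <= d ->
  d <= a * y + be * a / 2 * y ^ 2 ->
  1 - mu * a * y <= H -> H <= 1 - mu * a * y + et * a / 2 * y ^ 2 -> H <= 1 ->
  mu * a <= 1 / 2 ->
  Rabs (ln H + lam * (2 / nu) * (ln (1 + nu * y / 2) - ln (1 + nu * (y - d) / 2))) <=
  a * y * (Rabs (lam - mu) + lam * (Rabs (be - nu) / 2 + ga / 6
           + nu / 2 * (1 + be / 2) ^ 2 * (1 + nu / 2) * a) + et / 2 + 2 * mu ^ 2 * a).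
Proof.
  intros Hnu Hlam Ha Hbe Hga Hmu Het Hy Hd Hd1 Hd2 HH1 HH2 HH3 Hma.
  set (A := a * y).
  assert (HA : 0 <= A) by (unfold A; nra).
  assert (HAa : A <= a) by (unfold A; nra).
  set (q := 1 + nu * y / 2).
  assert (Hq : 1 <= q <= 1 + nu / 2) by (unfold q; nra).
  set (w := nu * d / 2 / q).
  assert (Hw0 : 0 <= w) by (unfold w; apply Rmult_le_pos; [nra|apply Rlt_le, Rinv_0_lt_compat; lra]).
  assert (Hw1 : w <= 1 - 1 / (1 + nu / 2)).
  { unfold w. apply le_div_l; [lra|].
    assert (HH : (1 - 1 / (1 + nu / 2)) * q = (nu / 2) * q / (1 + nu / 2)) by (field; lra).
    rewrite HH. apply le_div_r; [lra|]. unfold q. nra. }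
  assert (Hw1' : w < 1).
  { assert (0 < 1 / (1 + nu / 2)) by (apply Rdiv_lt_0_compat; lra). lra. }
  assert (Hq2 : 1 + nu * (y - d) / 2 = q * (1 - w)).
  { unfold w. replace (1 + nu * (y - d) / 2) with (q - nu * d / 2) by (unfold q; lra). field. lra. }
  assert (HL : ln q - ln (1 + nu * (y - d) / 2) = - ln (1 - w)).
  { rewrite Hq2, ln_mult by lra. ring. }
  rewrite HL.
  destruct (ln1m_bounds w (conj Hw0 Hw1')) as [L1 L2].
  assert (Hwq : 2 / nu * w = d / q) by (unfold w; field; lra).
  set (e1 := Rabs (be - nu) / 2 + ga / 6).
  assert (He1 : 0 <= e1) by (unfold e1; pose proof (Rabs_pos (be - nu)); lra).
  assert (Hdq : A - A * e1 <= d / q <= A + A * e1).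
  { assert (Hb1 : be - nu <= Rabs (be - nu)) by apply Rle_abs.
    assert (Hb2 : - Rabs (be - nu) <= be - nu) by (rewrite <- Rabs_Ropp; pose proof (Rle_abs (-(be-nu))); lra).
    assert (Hn1 : A * ((be - nu) * y / 2 - ga * y ^ 2 / 6) <= d - A * q) by (unfold A, q; nra).
    assert (Hn2 : d - A * q <= A * ((be - nu) * y / 2)) by (unfold A, q; nra).
    assert (Hlow : - (A * e1) <= A * ((be - nu) * y / 2 - ga * y ^ 2 / 6)).
    { unfold e1. assert (y ^ 2 <= 1) by nra. assert (ga * y ^ 2 <= ga) by nra.
      assert (- Rabs (be - nu) <= (be - nu) * y) by nra. nra. }
    assert (Hup : A * ((be - nu) * y / 2) <= A * e1).
    { unfold e1. assert ((be - nu) * y <= Rabs (be - nu)) by nra. nra. }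
    assert (E : d / q = A + (d - A * q) / q) by (field; lra).
    rewrite E. split.
    - assert (- (A * e1) <= (d - A * q) / q).
      { apply le_div_r; [lra|]. nra. }
      lra.
    - assert ((d - A * q) / q <= A * e1).
      { apply le_div_l; [lra|]. nra. }
      lra. }
  set (C1 := nu / 2 * (1 + be / 2) ^ 2 * (1 + nu / 2)).
  assert (Hdle : d <= A * (1 + be / 2)).
  { assert (y ^ 2 <= y) by (simpl; nra).
    assert (be * a * y ^ 2 <= be * a * y) by (apply Rmult_le_compat_l; nra).
    unfold A. lra. }
  assert (HwA : w <= nu / 2 * A * (1 + be / 2)).
  { unfold w. apply le_div_l; [lra|].
    assert (0 <= nu / 2 * A * (1 + be / 2)) by (apply Rmult_le_pos; nra). nra. }
  assert (Hinv : 1 / (1 - w) <= 1 + nu / 2).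
  { apply le_div_l; [lra|].
    assert (HH : (1 + nu / 2) * (1 - 1 / (1 + nu / 2)) = nu / 2) by (field; lra).
    nra. }
  assert (Hsq : 2 / nu * (w ^ 2 / (1 - w)) <= A * (C1 * a)).
  { assert (W2 : w ^ 2 <= (nu / 2 * A * (1 + be / 2)) * (nu / 2 * a * (1 + be / 2))).
    { assert (nu / 2 * A * (1 + be / 2) <= nu / 2 * a * (1 + be / 2)) by (apply Rmult_le_compat_r; nra).
      simpl. rewrite Rmult_1_r. apply Rmult_le_compat; lra. }
    replace (w ^ 2 / (1 - w)) with (w ^ 2 * (1 / (1 - w))) by (field; lra).
    assert (0 <= 1 / (1 - w)) by (apply Rlt_le, Rdiv_lt_0_compat; lra).
    assert (w ^ 2 * (1 / (1 - w)) <= (nu / 2 * A * (1 + be / 2)) * (nu / 2 * a * (1 + be / 2)) * (1 + nu / 2)).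
    { apply Rmult_le_compat; auto. apply pow2_ge_0. }
    assert (HZ : 2 / nu * (w ^ 2 * (1 / (1 - w))) <= 2 / nu * ((nu / 2 * A * (1 + be / 2)) * (nu / 2 * a * (1 + be / 2)) * (1 + nu / 2))).
    { apply Rmult_le_compat_l; auto. apply Rlt_le, Rdiv_lt_0_compat; lra. }
    eapply Rle_trans; [apply HZ|]. apply Req_le. unfold C1. field. lra. }
  assert (HDL : A - A * e1 <= 2 / nu * (- ln (1 - w)) <= A + A * e1 + A * (C1 * a)).
  { assert (Hpos : 0 < 2 / nu) by (apply Rdiv_lt_0_compat; lra).
    split.
    - assert (2 / nu * w <= 2 / nu * (- ln (1 - w))) by (apply Rmult_le_compat_l; lra). lra.
    - assert (HZ2 : 2 / nu * (- ln (1 - w)) <= 2 / nu * (w + w ^ 2 / (1 - w))) by (apply Rmult_le_compat_l; lra).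
      rewrite Rmult_plus_distr_l in HZ2. lra. }
  set (u := 1 - H).
  assert (Hmay : mu * a * y <= mu * a).
  { assert (0 <= mu * a) by nra. rewrite <- (Rmult_1_r (mu * a)) at 2. apply Rmult_le_compat_l; lra. }
  assert (Hu : 0 <= u <= 1 / 2) by (unfold u; lra).
  assert (HuA : mu * A - et * A / 2 <= u <= mu * A).
  { assert (y ^ 2 <= y) by (simpl; nra).
    assert (et * a * y ^ 2 <= et * a * y) by (apply Rmult_le_compat_l; nra).
    unfold u, A. split; lra. }
  assert (HlnH : - u - 2 * u ^ 2 <= ln H <= - u).
  { replace H with (1 - u) by (unfold u; ring).
    destruct (ln1m_bounds u ltac:(lra)) as [M1 M2]. split; [|lra].
    assert (u ^ 2 / (1 - u) <= 2 * u ^ 2).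
    { apply le_div_l; [lra|].
      assert (0 <= u ^ 2) by apply pow2_ge_0. nra. }
    lra. }
  assert (Hu2 : 2 * u ^ 2 <= 2 * mu ^ 2 * a * A).
  { assert (u ^ 2 <= (mu * A) ^ 2) by (apply pow_incr; lra).
    assert ((mu * A) ^ 2 <= mu ^ 2 * a * A).
    { replace ((mu * A) ^ 2) with (mu ^ 2 * A * A) by ring. apply Rmult_le_compat_r; auto.
      apply Rmult_le_compat_l; auto. apply pow2_ge_0. }
    lra. }
  assert (Hlam1 : lam * (2 / nu * (- ln (1 - w))) <= lam * (A + A * e1 + A * (C1 * a))) by (apply Rmult_le_compat_l; lra).
  assert (Hlam2 : lam * (A - A * e1) <= lam * (2 / nu * (- ln (1 - w)))) by (apply Rmult_le_compat_l; lra).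
  replace (lam * (2 / nu) * - ln (1 - w)) with (lam * (2 / nu * (- ln (1 - w)))) by ring.
  fold A. fold e1. fold C1.
  assert (Hlm : Rabs (lam - mu) >= lam - mu /\ Rabs (lam - mu) >= mu - lam).
  { split; [apply Rle_ge, Rle_abs|]. rewrite Rabs_minus_sym. apply Rle_ge, Rle_abs. }
  apply Rabs_le. split.
  - assert (0 <= A * Rabs (lam - mu) - A * (lam - mu)) by nra.
    assert (0 <= A * lam * (C1 * a)).
    { apply Rmult_le_pos. nra. apply Rmult_le_pos; [unfold C1|lra].
      apply Rmult_le_pos; [apply Rmult_le_pos; [lra|apply pow2_ge_0]|lra]. }
    assert (0 <= A * et) by nra.
    nra.
  - assert (0 <= A * Rabs (lam - mu) - A * (mu - lam)) by nra.
    assert (0 <= A * mu ^ 2 * a) by (apply Rmult_le_pos; [apply Rmult_le_pos; [lra|apply pow2_ge_0]|lra]).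
    nra.
Qed.

Fixpoint prodr (rho : nat -> R) (K j : nat) : R :=
  match j with
  | O => 1
  | S j' => prodr rho K j' * rho (K + S j')%nat
  end.

Lemma prodr_range rho K j : (forall n, (K < n)%nat -> 0 <= rho n <= 1) -> 0 <= prodr rho K j <= 1.
Proof.
  intros H. induction j; simpl. lra. specialize (H (K + S j)%nat ltac:(lia)). nra.
Qed.

Lemma chain_inv (Phi : nat -> R -> R) (T Hf : nat -> R -> R) (Psi : R -> R) (rho : nat -> R) (eps : R) (K : nat) :
  (forall n y, 0 <= y <= 1 -> Phi (S n) y = Phi n (T (S n) y) * Hf (S n) y) ->
  (forall n y, (K < n)%nat -> 0 <= y <= 1 -> 0 <= T n y <= rho n * y) ->
  (forall n, (K < n)%nat -> 0 <= rho n <= 1) ->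
  (forall n y, (K < n)%nat -> 0 <= y <= 1 -> 0 <= Hf n y) ->
  (forall n y, (K < n)%nat -> 0 <= y <= 1 ->
     exp (- (eps * ((1 - rho n) * y))) * Psi y <= Hf n y * Psi (T n y) <= exp (eps * ((1 - rho n) * y)) * Psi y) ->
  (forall y, 0 <= y <= 1 -> 0 <= Phi K y) ->
  (forall y, 0 <= y <= 1 -> 0 < Psi y) ->
  0 <= eps ->
  forall j y, 0 <= y <= 1 -> exists z, 0 <= z <= prodr rho K j * y /\
    Phi K z * Psi y * exp (- (eps * (y - z))) <= Phi (K + j)%nat y * Psi z <=
    Phi K z * Psi y * exp (eps * (y - z)).
Proof.
  intros HPhi HT Hrho HHf Hloc HPK HPsi Heps.
  induction j as [|j IH]; intros y Hy.
  - exists y. simpl. rewrite Nat.add_0_r. rewrite Rminus_diag, Rmult_0_r, Ropp_0, exp_0. lra.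
  - set (n := (K + S j)%nat).
    assert (Hn : (K < n)%nat) by (unfold n; lia).
    destruct (Hrho n Hn) as [Hr0 Hr1].
    destruct (HT n y Hn Hy) as [HT0 HT1].
    assert (Hy' : 0 <= T n y <= 1) by nra.
    destruct (IH (T n y) Hy') as [z [[Hz0 Hz1] [Lo Up]]].
    pose proof (prodr_range rho K j Hrho) as Hpr.
    exists z. split.
    + split; auto. simpl. fold n.
      assert (prodr rho K j * T n y <= prodr rho K j * (rho n * y)) by (apply Rmult_le_compat_l; lra). nra.
    + assert (HPn : Phi n y = Phi (K + j)%nat (T n y) * Hf n y).
      { unfold n. replace (K + S j)%nat with (S (K + j)) by lia. apply HPhi; auto. }
      rewrite HPn.
      destruct (Hloc n y Hn Hy) as [L1 L2].
      assert (Hz1' : z <= T n y) by nra.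
      assert (Hs : T n y - z + (1 - rho n) * y <= y - z) by nra.
      pose proof (HHf n y Hn Hy) as Hf0.
      assert (HPz : 0 <= Phi K z) by (apply HPK; split; nra).
      assert (HPs : 0 < Psi (T n y)) by (apply HPsi; auto).
      assert (HPsy : 0 < Psi y) by (apply HPsi; auto).
      split.
      *
        assert (A1 : Phi K z * Psi (T n y) * exp (- (eps * (T n y - z))) * Hf n y
                     <= Phi (K + j)%nat (T n y) * Psi z * Hf n y) by (apply Rmult_le_compat_r; auto).
        assert (A2 : Phi K z * exp (- (eps * (T n y - z))) * (exp (- (eps * ((1 - rho n) * y))) * Psi y)
                     <= Phi K z * exp (- (eps * (T n y - z))) * (Hf n y * Psi (T n y))).
        { apply Rmult_le_compat_l; auto. apply Rmult_le_pos; auto. apply Rlt_le, exp_pos. }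
        assert (A3 : exp (- (eps * (y - z))) <= exp (- (eps * (T n y - z))) * exp (- (eps * ((1 - rho n) * y)))).
        { rewrite <- exp_plus. destruct (Req_dec (- (eps * (y - z))) (- (eps * (T n y - z)) + - (eps * ((1 - rho n) * y)))) as [E|E].
          rewrite E; lra. apply Rlt_le, exp_increasing. nra. }
        assert (A4 : Phi K z * Psi y * exp (- (eps * (y - z))) <= Phi K z * Psi y * (exp (- (eps * (T n y - z))) * exp (- (eps * ((1 - rho n) * y))))).
        { apply Rmult_le_compat_l; auto. apply Rmult_le_pos; lra. }
        eapply Rle_trans; [apply A4|].
        replace (Phi (K + j)%nat (T n y) * Hf n y * Psi z) with (Phi (K + j)%nat (T n y) * Psi z * Hf n y) by ring.
        eapply Rle_trans; [|apply A1].
        replace (Phi K z * Psi (T n y) * exp (- (eps * (T n y - z))) * Hf n y) with (Phi K z * exp (- (eps * (T n y - z))) * (Hf n y * Psi (T n y))) by ring.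
        eapply Rle_trans; [|apply A2]. right; ring.
      *
        assert (A1 : Phi (K + j)%nat (T n y) * Psi z * Hf n y <=
                     Phi K z * Psi (T n y) * exp (eps * (T n y - z)) * Hf n y) by (apply Rmult_le_compat_r; auto).
        assert (A2 : Phi K z * exp (eps * (T n y - z)) * (Hf n y * Psi (T n y))
                     <= Phi K z * exp (eps * (T n y - z)) * (exp (eps * ((1 - rho n) * y)) * Psi y)).
        { apply Rmult_le_compat_l; auto. apply Rmult_le_pos; auto. apply Rlt_le, exp_pos. }
        assert (A3 : exp (eps * (T n y - z)) * exp (eps * ((1 - rho n) * y)) <= exp (eps * (y - z))).
        { rewrite <- exp_plus. destruct (Req_dec (eps * (y - z)) (eps * (T n y - z) + eps * ((1 - rho n) * y))) as [E|E].
          rewrite E; lra. apply Rlt_le, exp_increasing. nra. }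
        assert (A4 : Phi K z * Psi y * (exp (eps * (T n y - z)) * exp (eps * ((1 - rho n) * y))) <= Phi K z * Psi y * exp (eps * (y - z))).
        { apply Rmult_le_compat_l; auto. apply Rmult_le_pos; lra. }
        eapply Rle_trans; [|apply A4].
        replace (Phi (K + j)%nat (T n y) * Hf n y * Psi z) with (Phi (K + j)%nat (T n y) * Psi z * Hf n y) by ring.
        eapply Rle_trans; [apply A1|].
        replace (Phi K z * Psi (T n y) * exp (eps * (T n y - z)) * Hf n y) with (Phi K z * exp (eps * (T n y - z)) * (Hf n y * Psi (T n y))) by ring.
        eapply Rle_trans; [apply A2|]. right; ring.
Qed.

Fixpoint Asum (rho : nat -> R) (n : nat) : R :=
  match n with O => 0 | S n' => Asum rho n' + (1 - rho (S n')) end.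

Lemma Asum_s rho N : Asum rho (S N) = sum_f_R0 (fun i => 1 - rho (S i)) N.
Proof. induction N. simpl; ring. change (Asum rho (S (S N))) with (Asum rho (S N) + (1 - rho (S (S N)))). rewrite IHN. simpl. ring. Qed.

Lemma prodr_exp rho K j : (forall n, (K < n)%nat -> 0 <= rho n <= 1) ->
  prodr rho K j <= exp (Asum rho K - Asum rho (K + j)).
Proof.
  intros H. induction j.
  - simpl. rewrite Nat.add_0_r, Rminus_diag, exp_0. lra.
  - simpl prodr. replace (K + S j)%nat with (S (K + j)) by lia. simpl Asum.
    replace (Asum rho K - (Asum rho (K + j) + (1 - rho (S (K + j)))))
      with ((Asum rho K - Asum rho (K + j)) + (rho (S (K + j)) - 1)) by ring.
    rewrite exp_plus.
    pose proof (prodr_range rho K j H).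
    destruct (H (S (K + j)) ltac:(lia)).
    pose proof (exp_ineq1_le (rho (S (K + j)) - 1)).
    apply Rmult_le_compat; lra.
Qed.

Lemma prodr_cv0 rho K : (forall n, (1 <= n)%nat -> 0 <= rho n <= 1) ->
  cv_infty (fun N => sum_f_R0 (fun i => 1 - rho (S i)) N) ->
  Un_cv (fun j => prodr rho K j) 0.
Proof.
  intros H Hinf eps He.
  assert (H' : forall n, (K < n)%nat -> 0 <= rho n <= 1) by (intros; apply H; lia).
  destruct (Hinf (Asum rho K - ln eps)) as [N HN].
  exists (S N). intros j Hj. unfold R_dist. rewrite Rminus_0_r.
  pose proof (prodr_range rho K j H') as Hr. rewrite Rabs_pos_eq by lra.
  eapply Rle_lt_trans. apply prodr_exp; auto.
  specialize (HN (K + j - 1)%nat ltac:(lia)).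
  destruct (K + j)%nat eqn:E. lia.
  replace (S n - 1)%nat with n in HN by lia. rewrite <- Asum_s in HN.
  rewrite <- (exp_ln eps) by auto. apply exp_increasing. lra.
Qed.

Lemma FF_range g h n z : (forall n, (1 <= n)%nat -> is_pmf (g n)) -> (forall n, (1 <= n)%nat -> is_pmf (h n)) ->
  0 <= z <= 1 -> 0 <= FF g h n z <= 1.
Proof.
  intros Hg Hh. revert z. induction n; intros z Hz; simpl. lra.
  assert (A := pg_range (g (S n)) z (Hg (S n) ltac:(lia)) Hz).
  assert (B := pg_range (h (S n)) z (Hh (S n) ltac:(lia)) Hz).
  specialize (IHn _ A). nra.
Qed.

Lemma FF_lower g h (m1 : nat -> R) n : (forall n, (1 <= n)%nat -> is_pmf (g n)) -> (forall n, (1 <= n)%nat -> is_pmf (h n)) ->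
  (forall n, (1 <= n)%nat -> 0 <= m1 n) ->
  (forall n y, (1 <= n)%nat -> 0 <= y <= 1 -> 1 - m1 n * y <= pg (h n) (1 - y)) ->
  (forall n y, (1 <= n)%nat -> 0 <= y <= 1 -> 1 - y <= pg (g n) (1 - y)) ->
  exists Sb, 0 <= Sb /\ forall y, 0 <= y <= 1 -> 1 - Sb * y <= FF g h n (1 - y).
Proof.
  intros Hg Hh Hm1p Hhl Hgl. induction n.
  - exists 0. split. lra. intros; simpl; lra.
  - destruct IHn as [Sb [HS IH]].
    pose proof (Hm1p (S n) ltac:(lia)) as Hm.
    exists (Sb + m1 (S n)). split. lra. intros y Hy. simpl.
    pose proof (Hhl (S n) y ltac:(lia) Hy) as B1.
    pose proof (Hgl (S n) y ltac:(lia) Hy) as B2.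
    set (G := pg (g (S n)) (1 - y)) in *.
    assert (HG : 0 <= G <= 1) by (apply pg_range; [apply Hg; lia|lra]).
    assert (HB : 0 <= pg (h (S n)) (1 - y) <= 1) by (apply pg_range; [apply Hh; lia|lra]).
    assert (HF : 0 <= FF g h n G <= 1) by (apply FF_range; auto).
    assert (HGl : 1 - Sb * y <= FF g h n G).
    { replace G with (1 - (1 - G)) by ring. eapply Rle_trans; [|apply IH; lra].
      assert (Sb * (1 - G) <= Sb * y) by (apply Rmult_le_compat_l; lra).
      lra. }
    nra.
Qed.

Definition Psi (nu lam y : R) : R := exp (- (2 * lam / nu) * ln (1 + nu * y / 2)).

Lemma Psi_pos nu lam y : 0 < Psi nu lam y.
Proof. apply exp_pos. Qed.

Lemma Psi_le1 nu lam y : 0 < nu -> 0 <= lam -> 0 <= y -> Psi nu lam y <= 1.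
Proof.
  intros Hnu Hl Hy. unfold Psi. apply (Rle_trans _ (exp 0)); [|rewrite exp_0; lra].
  destruct (Req_dec (- (2 * lam / nu) * ln (1 + nu * y / 2)) 0) as [E|E]. rewrite E; lra.
  apply Rlt_le, exp_increasing.
  assert (0 <= ln (1 + nu * y / 2)).
  { destruct (Req_dec y 0). subst. replace (1 + nu * 0 / 2) with 1 by field. rewrite ln_1; lra.
    rewrite <- ln_1. apply Rlt_le, ln_increasing. lra. assert (0 < nu * y) by (apply Rmult_lt_0_compat; lra). lra. }
  assert (0 <= 2 * lam / nu) by (apply Rmult_le_pos; [lra|apply Rlt_le, Rinv_0_lt_compat; lra]).
  assert (0 <= (2 * lam / nu) * ln (1 + nu * y / 2)) by (apply Rmult_le_pos; auto). lra.
Qed.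

Lemma Psi_lower nu lam y : 0 < nu -> 0 <= lam -> 0 <= y -> 1 - lam * y <= Psi nu lam y.
Proof.
  intros Hnu Hl Hy. unfold Psi.
  eapply Rle_trans; [|apply exp_ineq1_le].
  assert (ln (1 + nu * y / 2) <= nu * y / 2).
  { pose proof (ln_le_sub1 (1 + nu * y / 2)). assert (0 <= nu * y) by nra. lra. }
  assert (0 <= 2 * lam / nu) by (apply Rmult_le_pos; [lra|apply Rlt_le, Rinv_0_lt_compat; lra]).
  assert (2 * lam / nu * ln (1 + nu * y / 2) <= 2 * lam / nu * (nu * y / 2)) by (apply Rmult_le_compat_l; auto).
  replace (2 * lam / nu * (nu * y / 2)) with (lam * y) in H1 by (field; lra). lra.
Qed.

Lemma cv_const c : Un_cv (fun _ => c) c.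
Proof. intros e He; exists O; intros; unfold R_dist; rewrite Rminus_diag, Rabs_R0; auto. Qed.

Lemma cv_abs_sub u l : Un_cv u l -> Un_cv (fun n => Rabs (u n - l)) 0.
Proof.
  intros H e He. destruct (H e He) as [N HN]. exists N. intros n Hn. specialize (HN n Hn).
  unfold R_dist in *. rewrite Rminus_0_r, Rabs_Rabsolu. auto.
Qed.

Lemma cv_ge0 u l : Un_cv u l -> (forall n, (1 <= n)%nat -> 0 <= u n) -> 0 <= l.
Proof.
  intros H Hp. destruct (Rle_or_lt 0 l); auto.
  destruct (H (- l) ltac:(lra)) as [N HN]. specialize (HN (S N) ltac:(lia)).
  specialize (Hp (S N) ltac:(lia)). unfold R_dist in HN.
  rewrite Rabs_pos_eq in HN by lra. lra.
Qed.

Lemma fmom_ge0 p s l : is_pmf p -> fmom p s l -> 0 <= l.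
Proof.
  intros [Hp _] H. apply is_series_Reals in H. apply (ser_ge0 _ _ H). intros; apply Rmult_le_pos; auto; apply pos_INR.
Qed.

Lemma le_div_r' a b q : 0 < q -> a * q <= b -> a <= b / q.
Proof. intros Hq H. apply (Rmult_le_reg_r q); auto. unfold Rdiv. rewrite Rmult_assoc, Rinv_l, Rmult_1_r by lra. auto. Qed.

Lemma cv_ext (u v : nat -> R) l l' : (forall n, u n = v n) -> l = l' -> Un_cv u l -> Un_cv v l'.
Proof. intros H E Hu e He. destruct (Hu e He) as [N HN]. exists N. intros n Hn. rewrite <- H, <- E. auto. Qed.

Lemma exp_le x y : x <= y -> exp x <= exp y.
Proof. intros H. destruct (Req_dec x y). subst; lra. apply Rlt_le, exp_increasing; lra. Qed.

Section Analytic.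
Variables (g h : nat -> nat -> R) (rho : nat -> R) (Gd : nat -> nat -> R) (m1 m2 : nat -> R) (nu lambda : R).
Hypotheses
  (Hg : forall n, (1 <= n)%nat -> is_pmf (g n))
  (Hh : forall n, (1 <= n)%nat -> is_pmf (h n))
  (Hrho : forall n, (1 <= n)%nat -> fmom (g n) 1 (rho n))
  (HGd : forall n s, (1 <= n)%nat -> (1 <= s)%nat -> fmom (g n) s (Gd n s))
  (Hm1 : forall n, (1 <= n)%nat -> fmom (h n) 1 (m1 n))
  (Hm2 : forall n, (1 <= n)%nat -> fmom (h n) 2 (m2 n))
  (Hi1 : forall n, (1 <= n)%nat -> rho n < 1)
  (Hi2 : Un_cv rho 1)
  (Hi3 : cv_infty (fun N => sum_f_R0 (fun i => 1 - rho (S i)) N))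
  (Hnu : 0 < nu)
  (Hii : Un_cv (fun n => Gd n 2%nat / (1 - rho n)) nu)
  (Hiii : forall s, (3 <= s)%nat -> Un_cv (fun n => Gd n s / (1 - rho n)) 0)
  (Hiv1 : Un_cv (fun n => m1 n / (1 - rho n)) lambda)
  (Hiv2 : Un_cv (fun n => m2 n / (1 - rho n)) 0).

Let a n := 1 - rho n.
Let be n := Gd n 2%nat / (1 - rho n).
Let ga n := Gd n 3%nat / (1 - rho n).
Let mu n := m1 n / (1 - rho n).
Let et n := m2 n / (1 - rho n).
Let E n := Rabs (lambda - mu n) + lambda * (Rabs (be n - nu) / 2 + ga n / 6
           + nu / 2 * (1 + be n / 2) ^ 2 * (1 + nu / 2) * a n) + et n / 2 + 2 * mu n ^ 2 * a n.

Lemma rho_ge0 n : (1 <= n)%nat -> 0 <= rho n.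
Proof. intros Hn. apply (fmom_ge0 (g n) 1); auto. Qed.

Lemma a_range n : (1 <= n)%nat -> 0 < a n <= 1.
Proof. intros Hn. unfold a. pose proof (rho_ge0 n Hn). pose proof (Hi1 n Hn). lra. Qed.

Lemma div_a_ge0 x n : (1 <= n)%nat -> 0 <= x -> 0 <= x / (1 - rho n).
Proof. intros Hn Hx. pose proof (a_range n Hn). unfold a in H. apply Rmult_le_pos; auto. apply Rlt_le, Rinv_0_lt_compat; lra. Qed.

Lemma lambda_ge0 : 0 <= lambda.
Proof.
  apply (cv_ge0 _ _ Hiv1). intros n Hn. apply div_a_ge0; auto. apply (fmom_ge0 (h n) 1); auto.
Qed.

Lemma a_cv : Un_cv a 0.
Proof.
  apply (cv_ext (fun n => 1 - rho n) _ (1 - 1)). intros; reflexivity. ring.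
  apply CV_minus. apply cv_const. auto.
Qed.

Lemma E_cv : Un_cv E 0.
Proof.
  assert (C1 : Un_cv (fun n => Rabs (lambda - mu n)) 0).
  { apply (cv_ext (fun n => Rabs (mu n - lambda)) _ 0). intros; apply Rabs_minus_sym. auto.
    apply cv_abs_sub. exact Hiv1. }
  assert (C2 : Un_cv (fun n => Rabs (be n - nu) / 2) 0).
  { apply (cv_ext (fun n => Rabs (be n - nu) * / 2) _ (0 * / 2)). intros; reflexivity. ring.
    apply CV_mult. apply cv_abs_sub. exact Hii. apply cv_const. }
  assert (C3 : Un_cv (fun n => ga n / 6) 0).
  { apply (cv_ext (fun n => ga n * / 6) _ (0 * / 6)). intros; reflexivity. ring.
    apply CV_mult. apply (Hiii 3%nat); lia. apply cv_const. }
  assert (C4 : Un_cv (fun n => nu / 2 * (1 + be n / 2) ^ 2 * (1 + nu / 2) * a n) 0).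
  { apply (cv_ext (fun n => (nu / 2 * ((1 + be n * / 2) * (1 + be n * / 2)) * (1 + nu / 2)) * a n) _
      ((nu / 2 * ((1 + nu * / 2) * (1 + nu * / 2)) * (1 + nu / 2)) * 0)). intros; simpl; field. ring.
    apply CV_mult; [|apply a_cv]. apply CV_mult; [|apply cv_const]. apply CV_mult; [apply cv_const|].
    assert (B : Un_cv (fun n => 1 + be n * / 2) (1 + nu * / 2)).
    { apply CV_plus. apply cv_const. apply CV_mult. exact Hii. apply cv_const. }
    apply CV_mult; auto. }
  assert (C5 : Un_cv (fun n => et n / 2) 0).
  { apply (cv_ext (fun n => et n * / 2) _ (0 * / 2)). intros; reflexivity. ring.
    apply CV_mult. exact Hiv2. apply cv_const. }
  assert (C6 : Un_cv (fun n => 2 * mu n ^ 2 * a n) 0).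
  { apply (cv_ext (fun n => 2 * (mu n * mu n) * a n) _ (2 * (lambda * lambda) * 0)). intros; simpl; ring. ring.
    apply CV_mult; [|apply a_cv]. apply CV_mult; [apply cv_const|]. apply CV_mult; exact Hiv1. }
  unfold E.
  apply (cv_ext (fun n => Rabs (lambda - mu n) + lambda * (Rabs (be n - nu) / 2 + ga n / 6
           + nu / 2 * (1 + be n / 2) ^ 2 * (1 + nu / 2) * a n) + et n / 2 + 2 * mu n ^ 2 * a n) _
     (0 + lambda * (0 + 0 + 0) + 0 + 0)). intros; reflexivity. ring.
  apply CV_plus; auto. apply CV_plus; auto. apply CV_plus; auto.
  apply CV_mult. apply cv_const. apply CV_plus; auto. apply CV_plus; auto.
Qed.

Lemma mua_cv : Un_cv (fun n => mu n * a n) 0.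
Proof.
  apply (cv_ext (fun n => mu n * a n) _ (lambda * 0)). intros; reflexivity. ring.
  apply CV_mult. exact Hiv1. apply a_cv.
Qed.

Definition Tm (n : nat) (y : R) := 1 - pg (g n) (1 - y).

Lemma T_bounds n y : (1 <= n)%nat -> 0 <= y <= 1 -> 0 <= Tm n y <= rho n * y.
Proof.
  intros Hn Hy. unfold Tm.
  destruct (pg_bounds (g n) y (rho n) (Gd n 2%nat) (Hg n Hn) (Hrho n Hn) (HGd n 2%nat Hn ltac:(lia)) Hy) as [B1 _].
  pose proof (pg_range (g n) (1 - y) (Hg n Hn) ltac:(lra)). lra.
Qed.

Lemma local_bound eps : 0 < eps -> exists K, forall n y, (K < n)%nat -> 0 <= y <= 1 ->
  exp (- (eps * ((1 - rho n) * y))) * Psi nu lambda y <= pg (h n) (1 - y) * Psi nu lambda (Tm n y)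
  <= exp (eps * ((1 - rho n) * y)) * Psi nu lambda y.
Proof.
  intros Heps.
  destruct (E_cv eps Heps) as [N1 HN1].
  destruct (mua_cv (1/2) ltac:(lra)) as [N2 HN2].
  exists (Nat.max N1 N2). intros n y Hn Hy.
  assert (Hn1 : (1 <= n)%nat) by lia.
  specialize (HN1 n ltac:(lia)). specialize (HN2 n ltac:(lia)).
  unfold R_dist in HN1, HN2. rewrite Rminus_0_r in HN1, HN2.
  destruct (a_range n Hn1) as [Ha0 Ha1].
  assert (Hane : 1 - rho n <> 0) by (unfold a in Ha0; lra).
  assert (Hbe : 0 <= be n) by (apply div_a_ge0; auto; apply (fmom_ge0 (g n) 2); auto; apply HGd; lia).
  assert (Hga : 0 <= ga n) by (apply div_a_ge0; auto; apply (fmom_ge0 (g n) 3); auto; apply HGd; lia).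
  assert (Hmu : 0 <= mu n) by (apply div_a_ge0; auto; apply (fmom_ge0 (h n) 1); auto).
  assert (Het : 0 <= et n) by (apply div_a_ge0; auto; apply (fmom_ge0 (h n) 2); auto).
  assert (Ebe : be n * a n = Gd n 2%nat) by (unfold be, a; field; auto).
  assert (Ega : ga n * a n = Gd n 3%nat) by (unfold ga, a; field; auto).
  assert (Emu : mu n * a n = m1 n) by (unfold mu, a; field; auto).
  assert (Eet : et n * a n = m2 n) by (unfold et, a; field; auto).
  destruct (pg_bounds (g n) y (rho n) (Gd n 2%nat) (Hg n Hn1) (Hrho n Hn1) (HGd n 2%nat Hn1 ltac:(lia)) Hy) as [G1 G2].
  pose proof (pg_lower3 (g n) y (rho n) (Gd n 2%nat) (Gd n 3%nat) (Hg n Hn1) (Hrho n Hn1) (HGd n 2%nat Hn1 ltac:(lia)) (HGd n 3%nat Hn1 ltac:(lia)) Hy) as G3.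
  destruct (pg_bounds (h n) y (m1 n) (m2 n) (Hh n Hn1) (Hm1 n Hn1) (Hm2 n Hn1) Hy) as [H1 H2].
  pose proof (pg_range (h n) (1 - y) (Hh n Hn1) ltac:(lra)) as Hr.
  pose proof (T_bounds n y Hn1 Hy) as HT.
  assert (Hmua : mu n * a n <= 1 / 2) by (rewrite Rabs_pos_eq in HN2 by (apply Rmult_le_pos; lra); lra).
  pose proof (rho_ge0 n Hn1) as Hr0.
  assert (HLE := local_est nu lambda (a n) (be n) (ga n) (mu n) (et n) y (y - Tm n y) (pg (h n) (1 - y))
    Hnu lambda_ge0 (conj Ha0 Ha1) Hbe Hga Hmu Het Hy).
  assert (HTy : Tm n y <= y).
  { assert (rho n * y <= 1 * y) by (apply Rmult_le_compat_r; [lra|]; pose proof (Hi1 n Hn1); lra). lra. }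
  specialize (HLE ltac:(lra)).
  assert (D1 : a n * y + be n * a n / 2 * y ^ 2 - ga n * a n / 6 * y ^ 3 <= y - Tm n y).
  { rewrite Ebe, Ega. unfold Tm, a. lra. }
  assert (D2 : y - Tm n y <= a n * y + be n * a n / 2 * y ^ 2).
  { rewrite Ebe. unfold Tm, a. lra. }
  assert (D3 : 1 - mu n * a n * y <= pg (h n) (1 - y)) by (rewrite Emu; lra).
  assert (D4 : pg (h n) (1 - y) <= 1 - mu n * a n * y + et n * a n / 2 * y ^ 2) by (rewrite Emu, Eet; lra).
  specialize (HLE D1 D2 D3 D4 ltac:(lra) Hmua).
  replace (y - (y - Tm n y)) with (Tm n y) in HLE by ring.
  fold (E n) in HLE.
  assert (HEe : E n <= eps) by (pose proof (Rle_abs (E n)); lra).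
  assert (Hay : 0 <= a n * y) by nra.
  assert (HB : a n * y * E n <= eps * (a n * y)) by nra.
  set (X := ln (pg (h n) (1 - y)) + lambda * (2 / nu) * (ln (1 + nu * y / 2) - ln (1 + nu * Tm n y / 2))) in *.
  assert (HX : - (eps * (a n * y)) <= X <= eps * (a n * y)).
  { revert HLE. unfold Rabs. destruct (Rcase_abs X); intros; lra. }
  assert (HH0 : 0 < pg (h n) (1 - y)).
  { assert (mu n * a n * y <= 1/2) by (assert (mu n * a n * y <= mu n * a n * 1) by (apply Rmult_le_compat_l; nra); lra). lra. }
  assert (EQ : pg (h n) (1 - y) * Psi nu lambda (Tm n y) = exp X * Psi nu lambda y).
  { unfold Psi, X. rewrite <- exp_plus. rewrite <- (exp_ln (pg (h n) (1 - y))) at 1 by auto.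
    rewrite <- exp_plus. f_equal. field. lra. }
  rewrite EQ. fold (a n).
  pose proof (Psi_pos nu lambda y).
  split; apply Rmult_le_compat_r; try lra; apply exp_le; lra.
Qed.

Lemma analytic y : 0 <= y <= 1 -> Un_cv (fun n => FF g h n (1 - y)) (Psi nu lambda y).
Proof.
  intros Hy eps Heps.
  set (dl := Rmin (1/2) (eps/8)).
  assert (Hdl : 0 < dl) by (unfold dl; apply Rmin_glb_lt; lra).
  assert (Hdl1 : dl <= 1/2) by apply Rmin_l.
  assert (Hdl2 : dl <= eps/8) by apply Rmin_r.
  set (ep := ln (1 + dl)).
  assert (Hep : 0 < ep) by (unfold ep; rewrite <- ln_1; apply ln_increasing; lra).
  assert (Hexp : exp ep = 1 + dl) by (unfold ep; apply exp_ln; lra).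
  destruct (local_bound ep Hep) as [K HK].
  pose proof lambda_ge0 as Hlam.
  assert (Hrr : forall n, (1 <= n)%nat -> 0 <= rho n <= 1).
  { intros n Hn. pose proof (rho_ge0 n Hn). pose proof (Hi1 n Hn). lra. }
  pose proof (chain_inv (fun n y => FF g h n (1 - y)) Tm (fun n y => pg (h n) (1 - y)) (Psi nu lambda) rho ep K) as CI.
  specialize (CI ltac:(intros n z Hz; simpl; unfold Tm; replace (1 - (1 - pg (g (S n)) (1 - z))) with (pg (g (S n)) (1 - z)) by ring; reflexivity)).
  specialize (CI ltac:(intros n z Hn Hz; apply T_bounds; auto; lia)).
  specialize (CI ltac:(intros n Hn; apply Hrr; lia)).
  specialize (CI ltac:(intros n z Hn Hz; apply pg_range; [apply Hh; lia|lra])).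
  specialize (CI HK).
  specialize (CI ltac:(intros z Hz; apply FF_range; auto; lra)).
  specialize (CI ltac:(intros z Hz; apply Psi_pos)).
  specialize (CI ltac:(lra)).
  destruct (FF_lower g h m1 K Hg Hh) as [Sb [HSb HFl]].
  { intros n Hn. apply (fmom_ge0 (h n) 1); auto. }
  { intros n z Hn Hz. apply (pg_bounds (h n) z (m1 n) (m2 n)); auto. }
  { intros n z Hn Hz. destruct (pg_bounds (g n) z (rho n) (Gd n 2%nat) (Hg n Hn) (Hrho n Hn) (HGd n 2%nat Hn ltac:(lia)) Hz) as [B _].
    pose proof (Hrr n Hn). assert (rho n * z <= z) by nra. lra. }
  set (dp := dl / (1 + lambda + Sb)).
  assert (Hdp : 0 < dp) by (unfold dp; apply Rdiv_lt_0_compat; lra).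
  assert (Hdpl : lambda * dp <= dl /\ Sb * dp <= dl).
  { unfold dp. split.
    - replace (lambda * (dl / (1 + lambda + Sb))) with ((lambda * dl) / (1 + lambda + Sb)) by (field; lra).
      apply le_div_l; nra.
    - replace (Sb * (dl / (1 + lambda + Sb))) with ((Sb * dl) / (1 + lambda + Sb)) by (field; lra).
      apply le_div_l; nra. }
  destruct (prodr_cv0 rho K Hrr Hi3 dp Hdp) as [J HJ].
  exists (K + J)%nat. intros n Hn.
  set (j := (n - K)%nat).
  assert (Hnj : n = (K + j)%nat) by (unfold j; lia).
  specialize (HJ j ltac:(unfold j; lia)). unfold R_dist in HJ. rewrite Rminus_0_r in HJ.
  assert (Hpr : 0 <= prodr rho K j <= 1) by (apply prodr_range; intros; apply Hrr; lia).
  rewrite Rabs_pos_eq in HJ by lra.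
  destruct (CI j y Hy) as [z [[Hz0 Hz1] [Lo Up]]].
  rewrite <- Hnj in Lo, Up.
  assert (Hzpr : z <= prodr rho K j) by (assert (prodr rho K j * y <= prodr rho K j * 1) by (apply Rmult_le_compat_l; lra); lra).
  assert (Hzp : z <= dp) by lra.
  assert (Hz : 0 <= z <= 1) by lra.
  assert (Hlz : lambda * z <= dl) by (assert (lambda * z <= lambda * dp) by (apply Rmult_le_compat_l; lra); lra).
  assert (HSz : Sb * z <= dl) by (assert (Sb * z <= Sb * dp) by (apply Rmult_le_compat_l; lra); lra).
  pose proof (Psi_lower nu lambda z Hnu Hlam Hz0) as Pz1.
  pose proof (Psi_le1 nu lambda z Hnu Hlam Hz0) as Pz2.
  pose proof (Psi_pos nu lambda y) as Py0.
  pose proof (Psi_le1 nu lambda y Hnu Hlam (proj1 Hy)) as Py1.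
  pose proof (HFl z Hz) as FK1.
  pose proof (FF_range g h K (1 - z) Hg Hh ltac:(lra)) as FK2.
  pose proof (FF_range g h n (1 - y) Hg Hh ltac:(lra)) as Fn.
  set (Phi := FF g h n (1 - y)) in *.
  set (P := Psi nu lambda y) in *.
  set (Pz := Psi nu lambda z) in *.
  set (FK := FF g h K (1 - z)) in *.
  assert (E1 : exp (ep * (y - z)) <= 1 + dl).
  { rewrite <- Hexp. apply exp_le. assert (y - z <= 1) by lra. nra. }
  assert (E2 : 1 - dl <= exp (- (ep * (y - z)))).
  { assert (exp (- ep) <= exp (- (ep * (y - z)))) by (apply exp_le; assert (y - z <= 1) by lra; nra).
    rewrite exp_Ropp, Hexp in H.
    assert (1 - dl <= / (1 + dl)).
    { replace (/ (1 + dl)) with (1 / (1 + dl)) by (field; lra). apply le_div_r' ; nra. }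
    lra. }
  assert (U1 : Phi * Pz <= P * (1 + dl)).
  { eapply Rle_trans; [apply Up|].
    assert (FK * P <= 1 * P) by (apply Rmult_le_compat_r; lra).
    assert (0 <= FK * P) by (apply Rmult_le_pos; lra).
    assert (FK * P * exp (ep * (y - z)) <= FK * P * (1 + dl)) by (apply Rmult_le_compat_l; lra).
    nra. }
  assert (L1 : (1 - dl) * P * (1 - dl) <= Phi * Pz).
  { eapply Rle_trans; [|apply Lo].
    assert ((1 - dl) * P <= FK * P) by (apply Rmult_le_compat_r; lra).
    apply Rmult_le_compat; try lra. apply Rmult_le_pos; lra. }
  assert (L2 : Phi * Pz <= Phi) by (assert (Phi * Pz <= Phi * 1) by (apply Rmult_le_compat_l; lra); lra).
  assert (U2 : Phi * (1 - dl) <= Phi * Pz) by (apply Rmult_le_compat_l; lra).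
  unfold R_dist. apply Rabs_def1.
  - assert ((Phi - P) * (1 - dl) <= 2 * dl * P) by nra.
    assert (2 * dl * P <= 2 * dl) by nra.
    assert (Phi - P <= 4 * dl).
    { destruct (Rle_or_lt (Phi - P) 0). lra. nra. }
    lra.
  - assert ((1 - dl) * P * (1 - dl) >= P - 2 * dl) by nra.
    lra.
Qed.

End Analytic.

Lemma nb_series nu lambda x : 0 < nu -> 0 <= lambda -> 0 <= x <= 1 ->
  is_series (fun k => nb_pmf (2 * lambda / nu) (nu / (2 + nu)) k * x ^ k) (Psi nu lambda (1 - x)).
Proof.
  intros Hnu Hl Hx.
  set (r := 2 * lambda / nu). set (p := nu / (2 + nu)).
  assert (Hr : 0 <= r) by (unfold r; apply Rmult_le_pos; [lra|apply Rlt_le, Rinv_0_lt_compat; lra]).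
  assert (Hp : 0 < p < 1).
  { unfold p. split. apply Rdiv_lt_0_compat; lra. apply (Rmult_lt_reg_r (2 + nu)); [lra|].
    unfold Rdiv. rewrite Rmult_assoc, Rinv_l by lra. lra. }
  assert (Hpx : -1 < p * x < 1) by nra.
  pose proof (binom_series r (p * x) Hr Hpx) as B.
  pose proof (ser_scal (Rpower (1 - p) r) _ _ B) as B2.
  eapply ser_ext; [|eapply is_series_ext; [intros; reflexivity|]].
  2:{ replace (Psi nu lambda (1 - x)) with (Rpower (1 - p) r * exp (- r * ln (1 - p * x))). exact B2.
      unfold Rpower, Psi. rewrite <- exp_plus. f_equal.
      assert (E : 1 - p * x = (1 - p) * (1 + nu * (1 - x) / 2)) by (unfold p; field; lra).
      rewrite E, ln_mult. unfold r. ring. lra. assert (0 <= nu * (1 - x)) by nra. lra. }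
  intros k. simpl. unfold nb_pmf, bc. rewrite Rpow_mult_distr. ring.
Qed.

Lemma cdf_cv (p : nat -> nat -> R) (q : nat -> R) : (forall k, Un_cv (fun n => p n k) (q k)) ->
  forall k, Un_cv (fun n => sum_f_R0 (p n) k) (sum_f_R0 q k).
Proof. intros H k. induction k; simpl. apply H. apply CV_plus; auto. Qed.

Theorem theorem5
  (g h : nat -> nat -> R)
  (law : nat -> nat -> R)
  (rho : nat -> R) (Gd : nat -> nat -> R) (m1 m2 : nat -> R)
  (nu lambda : R)
  (Hg : forall n, (1 <= n)%nat -> is_pmf (g n))
  (Hh : forall n, (1 <= n)%nat -> is_pmf (h n))
  (Hlaw0 : forall k, law O k = delta0 k)
  (HlawS : forall n k, (1 <= n)%nat ->
     infinite_sum (fun m => law (n - 1)%nat m * conv (conv_pow (g n) m) (h n) k)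
                  (law n k))
  (Hrho : forall n, (1 <= n)%nat -> fmom (g n) 1 (rho n))
  (HGd : forall n s, (1 <= n)%nat -> (1 <= s)%nat -> fmom (g n) s (Gd n s))
  (Hm1 : forall n, (1 <= n)%nat -> fmom (h n) 1 (m1 n))
  (Hm2 : forall n, (1 <= n)%nat -> fmom (h n) 2 (m2 n))
  (Hi1 : forall n, (1 <= n)%nat -> rho n < 1)
  (Hi2 : Un_cv rho 1)
  (Hi3 : cv_infty (fun N => sum_f_R0 (fun i => 1 - rho (S i)) N))
  (Hnu : 0 < nu)
  (Hii : Un_cv (fun n => Gd n 2%nat / (1 - rho n)) nu)
  (Hiii : forall s, (3 <= s)%nat -> Un_cv (fun n => Gd n s / (1 - rho n)) 0)
  (Hiv1 : Un_cv (fun n => m1 n / (1 - rho n)) lambda)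
  (Hiv2 : Un_cv (fun n => m2 n / (1 - rho n)) 0) :
  conv_distr law (nb_pmf (2 * lambda / nu) (nu / (2 + nu))).
Proof.
  pose proof (law_props g h law Hg Hh Hlaw0 HlawS) as LP.
  pose proof (lambda_ge0 g h rho m1 lambda Hg Hh Hrho Hm1 Hi1 Hiv1) as Hlam.
  unfold conv_distr. apply cdf_cv.
  apply (pgf_continuity law _ (fun n x => FF g h n x) (fun x => Psi nu lambda (1 - x))).
  - intros n k. destruct (LP n) as [L1 L2]. split; auto.
    assert (T := term_le (fun k => law n k * 1 ^ k) (FF g h n 1) k (L2 1 ltac:(lra))
       ltac:(intros; cbv beta; rewrite pow1, Rmult_1_r; auto)).
    simpl in T. rewrite ?pow1, ?Rmult_1_r in T.
    pose proof (FF_range g h n 1 Hg Hh ltac:(lra)). lra.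
  - intros k. pose proof (nb_series nu lambda 1 Hnu Hlam ltac:(lra)) as NB.
    assert (Hnn : forall k, 0 <= nb_pmf (2 * lambda / nu) (nu / (2 + nu)) k).
    { intros j. unfold nb_pmf. apply Rmult_le_pos. apply Rmult_le_pos.
      apply (bc_nonneg (2 * lambda / nu) j). apply Rmult_le_pos; [lra|apply Rlt_le, Rinv_0_lt_compat; lra].
      unfold Rpower. apply Rlt_le, exp_pos. apply pow_le. apply Rlt_le, Rdiv_lt_0_compat; lra. }
    split; auto.
    assert (T := term_le _ _ k NB ltac:(intros; cbv beta; rewrite pow1, Rmult_1_r; auto)).
    simpl in T. rewrite ?pow1, ?Rmult_1_r in T.
    pose proof (Psi_le1 nu lambda (1 - 1) Hnu Hlam ltac:(lra)). lra.
  - intros n x Hx. apply (proj2 (LP n)). lra.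
  - intros x Hx. apply nb_series; auto; lra.
  - intros x Hx.
    pose proof (analytic g h rho Gd m1 m2 nu lambda Hg Hh Hrho HGd Hm1 Hm2 Hi1 Hi2 Hi3 Hnu Hii Hiii Hiv1 Hiv2 (1 - x) ltac:(lra)) as A.
    eapply cv_ext; [|reflexivity|exact A]. intros n. simpl. f_equal. ring.
Qed.
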